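(* Let $p$ be prime and let $k\ge2$, $\ell\ge1$ be integers. Let $c_{i_1},\dots,c_{i_{k-1}}$ be $k-1$ pairwise distinct codewords of a $p$-ary prefix-free code with lengths $\ell_{i_1}\le\cdots\le\ell_{i_{k-1}}$, let $y_{i_m}=\sum_{t=0}^{\ell_{i_m}-1}c_{i_m,t}x^t\in F_p[x]$, and let $L_{i_m}=(\ell_{i_m}-1)(k-1)+\ell$. Let $r_0,\dots,r_{k-2}$ be independent random polynomials, each uniformly distributed over the polynomials in $F_p[x]$ of degree less than $L_{i_{k-1}}$. For a secret $s\in F_p[x]$ of degree less than $\ell$ define the random shares $$Z^{(s)}_{i_m}\equiv\sum_{j=0}^{k-2}r_j\,y_{i_m}^{\,j}+s\,y_{i_m}^{\,k-1}\pmod{x^{L_{i_m}}},\qquad 1\le m\le k-1,$$ each taken as a polynomial of degree less than $L_{i_m}$. Then for any two secrets $s_0,s_1$ of degree less than $\ell$, the random tuples $(Z^{(s_0)}_{i_1},\dots,Z^{(s_0)}_{i_{k-1}})$ and $(Z^{(s_1)}_{i_1},\dots,Z^{(s_1)}_{i_{k-1}})$ have the same probability distribution.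
   Context: A $p$-ary prefix-free code is a set of finite strings over the alphabet $F_p$ none of which is a prefix of another. $F_p[x]$ is the polynomial ring over the finite field $F_p$. *)

(* Defs.v *)
From HB Require Import structures.
From mathcomp Require Import all_boot all_order all_algebra.
Set Implicit Arguments. Unset Strict Implicit. Unset Printing Implicit Defensive.
Import GRing.Theory.
Local Open Scope ring_scope.

Definition prefix_free (p : nat) (C : seq 'F_p -> Prop) : Prop :=
  forall u v : seq 'F_p, C u -> C v -> prefix u v -> u = v.

Definition cw_poly (p : nat) (c : seq 'F_p) : {poly 'F_p} := Poly c.

Definition share_len (k ell len : nat) : nat := ((len - 1) * (k - 1) + ell)%N.

(* Sample space: k-1 random polynomials r_0..r_{k-2}, each of degree < Lmax,
   encoded by their coefficient tuples (coefficient of x^t at position t). *)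
Definition rand_space (p k Lmax : nat) := {ffun 'I_k.-1 -> Lmax.-tuple 'F_p}.

Definition vec_poly (p n : nat) (v : n.-tuple 'F_p) : {poly 'F_p} :=
  Poly (tval v).

Definition share (p k ell Lmax : nat) (r : rand_space p k Lmax)
  (s : {poly 'F_p}) (c : seq 'F_p) : {poly 'F_p} :=
  let y := cw_poly c in
  (\sum_(j < k.-1) vec_poly (r j) * y ^+ j + s * y ^+ k.-1)
    %% 'X^(share_len k ell (size c)).

Definition shares (p k ell Lmax : nat) (cs : seq (seq 'F_p))
  (s : {poly 'F_p}) (r : rand_space p k Lmax) : seq {poly 'F_p} :=
  [seq share ell r s c | c <- cs].

Definition share_prob (p k ell Lmax : nat) (cs : seq (seq 'F_p))
  (s : {poly 'F_p}) (z : seq {poly 'F_p}) : rat :=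
  (#|[set r : rand_space p k Lmax | shares ell cs s r == z]|%:R
     / #|[set: rand_space p k Lmax]|%:R)%R.

(* Main.v *)
Require Import Defs.
From HB Require Import structures.
From mathcomp Require Import all_boot all_order all_algebra.
From mathcomp Require Import zify ring.
Local Open Scope ring_scope.
Import GRing.Theory.

Lemma path_le_last (a : nat) (t : seq nat) :
  path leq a t -> forall x, x \in a :: t -> (x <= last a t)%N.
Proof.
elim: t a => [|b t IH] a /=.
  by move=> _ x; rewrite inE => /eqP ->.
move=> /andP [hab hp] x; rewrite inE => /orP [/eqP ->|hx].
  by apply: leq_trans hab _; apply: IH => //; rewrite inE eqxx.
exact: IH.
Qed.

Lemma prod_coef_size (F : fieldType) (M : nat) (s : seq {poly F}) :
  (forall y, y \in s -> (size y <= M)%N) ->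
  forall j, leq (size ((\prod_(y <- s) ('X - y%:P))`_j)) (size s * (M - 1) + 1)%N.
Proof.
elim: s => [|a s IH] hs j.
  rewrite big_nil coef1 /=; case: (j == 0)%N.
    by rewrite size_poly1.
  by rewrite size_poly0.
rewrite big_cons mulrC mulrBr coefB coefMX coefMC.
have hs' : forall y, y \in s -> (size y <= M)%N.
  by move=> y hy; apply: hs; rewrite inE hy orbT.
have ha : (size a <= M)%N by apply: hs; rewrite inE eqxx.
apply: leq_trans (size_polyD _ _) _; rewrite size_polyN geq_max; apply/andP; split.
  case: (j == 0)%N; first by rewrite size_poly0.
  by apply: leq_trans (IH hs' _) _; rewrite /=; nia.
apply: leq_trans (size_polyMleq _ _) _.
have := IH hs' j; rewrite /= mulSn; move: ha; set A := size _; set B := size a; set C := size _; move=> *. lia.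
Qed.

Definition addT {F : fieldType} {n} (t : n.-tuple F) (q : {poly F}) : n.-tuple F :=
  [tuple tnth t i + q`_i | i < n].

Lemma addT_poly (P : nat) n (t : n.-tuple 'F_P) (q : {poly 'F_P}) :
  (size q <= n)%N -> vec_poly (addT t q) = vec_poly t + q.
Proof.
move=> hq; apply/polyP => i; rewrite /vec_poly coefD !coef_Poly.
case: (ltnP i n) => hi.
  by rewrite -[i]/(nat_of_ord (Ordinal hi)) nth_mktuple (tnth_nth 0).
by rewrite !nth_default ?size_tuple ?addr0 // (leq_trans hq hi).
Qed.

Lemma addT_inj (F : fieldType) n (q : {poly F}) : injective (fun t : n.-tuple F => addT t q).
Proof.
move=> t t' /= h; apply: eq_from_tnth => i.
have := congr1 (fun u => tnth u i) h; rewrite /addT !tnth_mktuple.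
exact: addIr.
Qed.

Lemma card_le (p k ell : nat) (cs : seq (seq 'F_p)) (s0 s1 : {poly 'F_p}) :
  (2 <= k)%N ->
  size cs = k.-1 ->
  sorted leq [seq size c | c <- cs] ->
  (size s0 <= ell)%N -> (size s1 <= ell)%N ->
  let Lmax := share_len k ell (size (last [::] cs)) in
  forall z : seq {poly 'F_p},
  (#|[set r : rand_space p k Lmax | shares ell cs s0 r == z]| <=
   #|[set r : rand_space p k Lmax | shares ell cs s1 r == z]|)%N.
Proof.
move=> hk hcs hsort h0 h1 Lmax z.
set M := size (last [::] cs).
have hM : forall c, c \in cs -> (size (cw_poly c) <= M)%N.
  move=> c hc; apply: leq_trans (size_Poly _) _.
  rewrite /M -(last_map size) /=.
  have : size c \in [seq size c | c <- cs] by rewrite map_f.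
  move: hsort; case: [seq size c | c <- cs] => [//|c0 cs'] /= hsort.
  exact: path_le_last.
set P := \prod_(y <- map (@cw_poly p) cs) ('X - y%:P).
have hP : forall j, leq (size (P`_j)) ((k.-1) * (M - 1) + 1)%N.
  move=> j; rewrite -hcs -(size_map (@cw_poly p)); apply: prod_coef_size.
  by move=> y /mapP [c hc ->]; apply: hM.
pose d (j : 'I_k.-1) := (s1 - s0) * P`_j.
have hd : forall j, (size (d j) <= Lmax)%N.
  move=> j; apply: leq_trans (size_polyMleq _ _) _.
  have hs : leq (size (s1 - s0)) ell.
    by apply: leq_trans (size_polyD _ _) _; rewrite size_polyN geq_max h1 h0.
  have := hP j; rewrite /Lmax /share_len -/M; move: (size _) (size _) hs; move=> a b ha hb; have -> : (k - 1 = k.-1)%N by rewrite subn1. rewrite [X in (_ <= X + _)%N]mulnC. move: hb; rewrite -!subn1; set X := (_ * _)%N; move=> hb; move: X hb => X hb; lia.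
pose f (r : rand_space p k Lmax) : rand_space p k Lmax :=
  [ffun j => addT (r j) (d j)].
have finj : injective f.
  move=> r r' h; apply/ffunP => j.
  have := congr1 (fun g : rand_space p k Lmax => g j) h; rewrite /f !ffunE.
  exact: addT_inj.
rewrite -(card_imset _ finj); apply: subset_leq_card; apply/subsetP => r'.
move=> /imsetP [r]; rewrite inE => /eqP hr ->; rewrite inE -hr; apply/eqP.
rewrite /shares; apply/eq_in_map => c hc; rewrite /share; congr (_ %% _).
set y := cw_poly c.
have hroot : P.[y] = 0.
  by apply/eqP; rewrite -/(root P y) root_prod_XsubC map_f.
have hsz : size P = k by rewrite size_prod_XsubC size_map hcs prednK // ltnW.
have hlead : P`_(k.-1) = 1.
  have := monic_prod_XsubC (map (@cw_poly p) cs) xpredT id; rewrite /P.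
  move/monicP; rewrite lead_coefE -/P hsz => ->. done.
have hsz' : (size P <= (k.-1).+1)%N by rewrite hsz prednK // ltnW.
move: hroot; rewrite (horner_coef_wide _ hsz') big_ord_recr /= hlead mul1r.
move=> hroot.
have -> : \sum_(j < k.-1) vec_poly (f r j) * y ^+ j =
  \sum_(j < k.-1) vec_poly (r j) * y ^+ j + (s1 - s0) * \sum_(j < k.-1) P`_j * y ^+ j.
  rewrite mulr_sumr -big_split /=; apply: eq_bigr => j _.
  rewrite /f ffunE addT_poly // /d; ring.
have -> : \sum_(j < k.-1) P`_j * y ^+ j = - y ^+ k.-1.
  by apply/eqP; rewrite -subr_eq0 opprK hroot.
ring.
Qed.

Theorem mainTheorem8 (p k ell : nat) (C : seq 'F_p -> Prop)
  (cs : seq (seq 'F_p)) (s0 s1 : {poly 'F_p}) :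
  prime p -> (2 <= k)%N -> (1 <= ell)%N ->
  prefix_free C ->
  size cs = k.-1 -> uniq cs -> (forall c, c \in cs -> C c) ->
  (forall c, c \in cs -> 0 < size c)%N ->
  sorted leq [seq size c | c <- cs] ->
  (size s0 <= ell)%N -> (size s1 <= ell)%N ->
  let Lmax := share_len k ell (size (last [::] cs)) in
  forall z : seq {poly 'F_p},
    share_prob k ell Lmax cs s0 z = share_prob k ell Lmax cs s1 z.
Proof.
move=> _ hk _ _ hcs _ _ _ hsort h0 h1 Lmax z.
rewrite /share_prob; congr (_ %:R / _).
by apply/eqP; rewrite eqn_leq !card_le.
Qed.
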